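(* Let $q$ be a prime power, $M\geq2$ an integer with $(M,q)=1$, and $n\geq1$. Let $U_{t+1,n}$ denote the $n\times n$ matrix over $\mathbb{F}_q$ with $-1$ on the diagonal, $1$ on the superdiagonal and $0$ elsewhere. If $\alpha\in\mathrm{GL}(n,q)$ satisfies $\alpha^M=U_{t+1,n}$, then the semisimple part $\alpha_s$ of $\alpha$ (in its Jordan decomposition $\alpha=\alpha_s\alpha_u$) is a scalar matrix. *)

(* Defs.v *)
From HB Require Import structures.
From mathcomp Require Import all_boot all_order all_algebra all_field.
Set Implicit Arguments. Unset Strict Implicit. Unset Printing Implicit Defensive.
Import GRing.Theory.
Local Open Scope ring_scope.

Definition Umx (F : fieldType) (n : nat) : 'M[F]_n :=
  \matrix_(i < n, j < n)
     (if i == j then -1 else if (j : nat) == i.+1 then 1 else 0).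

(* semisimple: minimal polynomial separable (i.e. diagonalizable over the
   algebraic closure). *)
Definition semisimple_mx (F : fieldType) (n : nat) (A : 'M[F]_n.+1) : bool :=
  separable_poly (mxminpoly A).

Definition unipotent_mx (F : fieldType) (n : nat) (A : 'M[F]_n.+1) : bool :=
  (A - 1) ^+ n.+1 == 0.

(* Main.v *)
Require Import Defs.
From HB Require Import structures.
From mathcomp Require Import all_boot all_order all_algebra all_field.
Set Implicit Arguments. Unset Strict Implicit. Unset Printing Implicit Defensive.
Import GRing.Theory.
Local Open Scope ring_scope.

Section S.
Variables (F : fieldType) (n : nat).
Definition Nmx : 'M[F]_n.+1 := \matrix_(i, j) (if (j : nat) == i.+1 then 1 else 0).

Lemma UmxE : Umx F n.+1 = Nmx - 1.
Proof.
apply/matrixP => i j; rewrite !mxE.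
case: eqP => [->|_]; first by rewrite (ltn_eqF (ltnSn _)) sub0r.
by rewrite subr0.
Qed.

Variable s : 'M[F]_n.+1.
Hypothesis sN : s *m Nmx = Nmx *m s.
Let f a b := s (inord a) (inord b).

Lemma sN1 a b : (b < n)%N -> (s *m Nmx) (inord a) (inord b.+1) = f a b.
Proof.
move=> hb; rewrite mxE (bigD1 (inord b)) //= big1 ?addr0.
  by rewrite mxE !inordK ?eqxx ?mulr1 // ltnS ltnW.
move=> k hk; rewrite mxE inordK ?ltnS //.
case: eqP => [[e]|]; last by rewrite mulr0.
by case/eqP: hk; apply/val_inj; rewrite /= inordK ?e // ltnS ltnW.
Qed.

Lemma sN0 i : (s *m Nmx) i ord0 = 0.
Proof. by rewrite mxE; apply: big1 => k _; rewrite mxE /= mulr0. Qed.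

Lemma Ns1 a b : (a < n)%N -> (Nmx *m s) (inord a) (inord b) = f a.+1 b.
Proof.
move=> ha; rewrite mxE (bigD1 (inord a.+1)) //= big1 ?addr0.
  by rewrite mxE !inordK ?eqxx ?mul1r // ltnS ltnW.
move=> k hk; rewrite mxE (inordK (leqW ha)).
case: eqP => [e|]; last by rewrite mul0r.
by case/eqP: hk; apply/val_inj; rewrite /= inordK ?e.
Qed.

Lemma i0 : inord 0 = ord0 :> 'I_n.+1.
Proof. by apply/val_inj; rewrite /= inordK. Qed.

Lemma lowz b : forall a, (a <= n)%N -> (b < a)%N -> f a b = 0.
Proof.
elim: b => [|b IH] [|a] // ha hb.
  by rewrite -(Ns1 0 ha) -sN i0 sN0.
by rewrite -(Ns1 _ ha) -sN (sN1 _ (ltnW (leq_trans hb ha))) IH // ltnW.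
Qed.

Lemma diagc a : (a <= n)%N -> f a a = f 0 0.
Proof.
elim: a => [|a IH] // ha.
by rewrite -(Ns1 _ ha) -sN (sN1 _ ha) IH // ltnW.
Qed.
Lemma s_trig : is_trig_mx s^T.
Proof.
apply/is_trig_mxP => i j hij; rewrite mxE.
by have := lowz (ltn_ord j) hij; rewrite /f !inord_val.
Qed.

Lemma s_diag i : s i i = s ord0 ord0.
Proof. by have := diagc (ltn_ord i); rewrite /f !inord_val i0. Qed.

Lemma char_s : char_poly s = ('X - (s ord0 ord0)%:P) ^+ n.+1.
Proof.
have -> : char_poly s = char_poly s^T.
  rewrite /char_poly -det_tr; congr (\det _); apply/matrixP => i j.
  by rewrite !mxE eq_sym.
rewrite char_poly_trig ?s_trig //.
rewrite (eq_bigr (fun _ => 'X - (s ord0 ord0)%:P)) => [|i _]; last by rewrite mxE s_diag.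
by rewrite prodr_const card_ord.
Qed.
End S.

Lemma scalar_of (F : fieldType) n (s : 'M[F]_n.+1) :
  s *m Nmx F n = Nmx F n *m s -> separable_poly (mxminpoly s) -> is_scalar_mx s.
Proof.
move=> sN sep; set c := s ord0 ord0.
have hd : mxminpoly s %| ('X - c%:P) ^+ n.+1 by rewrite -char_s // mxminpoly_dvd_char.
case/dvdp_exp_XsubCP: hd => k _ hk.
have sz : size ('X - c%:P) != 1%N by rewrite size_XsubC.
case: k hk => [|[|k]] hk.
- exfalso; move: (eqp_size hk); rewrite expr0 size_poly1 size_mxminpoly => e.
  by case: e => e; move: (mxminpoly_nonconstant s); rewrite e.
- have e : mxminpoly s = 'X - c%:P.
    by apply/eqP; rewrite -eqp_monic ?mxminpoly_monic ?monicXsubC // expr1 in hk *.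
  apply/is_scalar_mxP; exists c; apply/eqP; rewrite -subr_eq0.
  by have := mx_root_minpoly s; rewrite e rmorphB /= horner_mx_X horner_mx_C => ->.
- exfalso; have := separable_nosquare (k := k.+2) sep (erefl _) sz.
  by rewrite (eqp_dvdr _ hk) dvdpp.
Qed.

Unset Implicit Arguments. Set Strict Implicit.

Theorem lemma7p2 (F : finFieldType) (q M n : nat)
  (hq : #|F| = q) (hM : (2 <= M)%N) (hMq : coprime M q)
  (alpha : 'M[F]_n.+1) (halpha : alpha \in unitmx)
  (hpow : alpha ^+ M = Umx F n.+1)
  (s u : 'M[F]_n.+1)
  (hdec : alpha = s * u) (hcomm : s * u = u * s)
  (hs : semisimple_mx s) (hu : unipotent_mx u) :
  is_scalar_mx s.
Proof.
apply: scalar_of hs.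
have ca : GRing.comm s alpha by rewrite /GRing.comm hdec -mulrA -hcomm.
have := commrX M ca; rewrite /GRing.comm hpow UmxE mulrBr mulrBl mulr1 mul1r.
by move/subIr; rewrite !mulmxE.
Qed.
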